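(* Let $\theta(q,x):=\sum_{j=0}^{\infty}q^{j(j+1)/2}x^j$ and $w:=3/\sqrt{2}$. For all $(q,t)\in[0.6,0.75]\times[1,w]$, one has $\theta(q,-t+wi)\neq 0$. *)

(* Defs.v *)
From Stdlib Require Import Reals.
From Coquelicot Require Import Coquelicot.
Open Scope R_scope.

(* j-th term of theta(q,x) = sum_{j>=0} q^{j(j+1)/2} x^j ; j(j+1)/2 is an exact nat division *)
Definition theta_term (q : R) (x : C) (j : nat) : C :=
  Cmult (RtoC (q ^ (j * (j + 1) / 2)%nat)) (Cpow x j).

Definition theta_is (q : R) (x : C) (l : C) : Prop :=
  is_series (theta_term q x) l.

Definition w : R := 3 / sqrt 2.

(* Main.v *)
Require Import Defs.
From Stdlib Require Import ZArith Lra Lia List.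
From Stdlib Require Import Reals.
From Coquelicot Require Import Coquelicot.
Import ListNotations.
Open Scope R_scope.
Open Scope Z_scope.

Fixpoint uadd (p r : list Z) : list Z :=
  match p, r with
  | nil, _ => r
  | _, nil => p
  | a :: p', b :: r' => (a + b) :: uadd p' r'
  end.
Definition uscal (c : Z) (p : list Z) : list Z := map (fun a => c * a) p.
Fixpoint umul (p r : list Z) : list Z :=
  match p with
  | nil => nil
  | a :: p' => uadd (uscal a r) (0 :: umul p' r)
  end.
Fixpoint badd (P R : list (list Z)) : list (list Z) :=
  match P, R with
  | nil, _ => R
  | _, nil => P
  | a :: P', b :: R' => uadd a b :: badd P' R'
  end.
Definition bscal (c : list Z) (P : list (list Z)) := map (umul c) P.
Fixpoint bmul (P R : list (list Z)) : list (list Z) :=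
  match P with
  | nil => nil
  | a :: P' => badd (bscal a R) (nil :: bmul P' R)
  end.
Fixpoint bpow (P : list (list Z)) (n : nat) :=
  match n with O => [[1]] | S n => bmul P (bpow P n) end.
Definition wmul (K : Z) (x y : list (list Z) * list (list Z)) :=
  (badd (bmul (fst x) (fst y)) (bscal [- K] (bmul (snd x) (snd y))),
   badd (bmul (fst x) (snd y)) (bmul (snd x) (fst y))).
Fixpoint wpow K x (n : nat) :=
  match n with O => ([[1]], nil) | S n => wmul K x (wpow K x n) end.
Definition tpoly a b c d e f K (j : nat) :=
  bscal [c ^ Z.of_nat (66 - j * (j + 1) / 2) * f ^ Z.of_nat (11 - j)]
  (bmul (bpow [[a];[b]] (j * (j + 1) / 2)%nat) (fst (wpow K ([[-d; -e]], [[1]]) j))).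
Fixpoint Fpoly a b c d e f K (n : nat) :=
  match n with O => tpoly a b c d e f K O | S m => badd (Fpoly a b c d e f K m) (tpoly a b c d e f K n) end.

Fixpoint uabs (p : list Z) : Z :=
  match p with nil => 0 | a :: p' => Z.abs a + uabs p' end.
Fixpoint babs (P : list (list Z)) : Z :=
  match P with nil => 0 | a :: P' => uabs a + babs P' end.
Definition ulow (p : list Z) : Z :=
  match p with nil => 0 | a :: p' => a - uabs p' end.
Definition blow (P : list (list Z)) : Z :=
  match P with nil => 0 | a :: P' => ulow a - babs P' end.
Definition check a b c d e f K :=
  Z.leb (c ^ 66 * f ^ 11) (100 * blow (Fpoly a b c d e f K 11)).
Open Scope R_scope.
Lemma abs_bnd a b : Rabs a <= b -> -b <= a <= b.
Proof. unfold Rabs; destruct Rcase_abs; lra. Qed.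
Fixpoint uev (p : list Z) (x : R) : R :=
  match p with nil => 0 | a :: p' => IZR a + x * uev p' x end.
Fixpoint bev (P : list (list Z)) (u v : R) : R :=
  match P with nil => 0 | a :: P' => uev a v + u * bev P' u v end.

Lemma uev_add p r x : uev (uadd p r) x = uev p x + uev r x.
Proof.
  revert r; induction p as [|a p IH]; intros [|b r]; simpl; try ring.
  rewrite IH, plus_IZR; ring.
Qed.
Lemma uev_scal c p x : uev (uscal c p) x = IZR c * uev p x.
Proof.
  induction p as [|a p IH]; simpl; [ring|]. rewrite IH, mult_IZR; ring.
Qed.
Lemma uev_mul p r x : uev (umul p r) x = uev p x * uev r x.
Proof.
  induction p as [|a p IH]; simpl; [ring|].
  rewrite uev_add, uev_scal; simpl; rewrite IH; ring.
Qed.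
Lemma bev_add P R u v : bev (badd P R) u v = bev P u v + bev R u v.
Proof.
  revert R; induction P as [|a P IH]; intros [|b R]; simpl; try ring.
  rewrite IH, uev_add; ring.
Qed.
Lemma bev_scal c P u v : bev (bscal c P) u v = uev c v * bev P u v.
Proof.
  unfold bscal; induction P as [|a P IH]; simpl; [ring|].
  rewrite IH, uev_mul; ring.
Qed.
Lemma bev_mul P R u v : bev (bmul P R) u v = bev P u v * bev R u v.
Proof.
  induction P as [|a P IH]; simpl; [ring|].
  rewrite bev_add, bev_scal; simpl; rewrite IH; ring.
Qed.
Lemma bev_pow P n u v : bev (bpow P n) u v = bev P u v ^ n.
Proof.
  induction n as [|n IH]; simpl; [ring|]. rewrite bev_mul, IH; ring.
Qed.

Lemma uabs_ok p x : Rabs x <= 1 -> Rabs (uev p x) <= IZR (uabs p).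
Proof.
  intro Hx; induction p as [|a p IH]; simpl.
  - rewrite Rabs_R0; lra.
  - rewrite plus_IZR, abs_IZR.
    eapply Rle_trans; [apply Rabs_triang|].
    rewrite Rabs_mult.
    assert (0 <= Rabs (uev p x)) by apply Rabs_pos.
    assert (0 <= Rabs x) by apply Rabs_pos.
    nra.
Qed.
Lemma babs_ok P u v : Rabs u <= 1 -> Rabs v <= 1 -> Rabs (bev P u v) <= IZR (babs P).
Proof.
  intros Hu Hv; induction P as [|a P IH]; simpl.
  - rewrite Rabs_R0; lra.
  - rewrite plus_IZR.
    eapply Rle_trans; [apply Rabs_triang|].
    rewrite Rabs_mult.
    pose proof (uabs_ok a v Hv).
    assert (0 <= Rabs (bev P u v)) by apply Rabs_pos.
    assert (0 <= Rabs u) by apply Rabs_pos.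
    nra.
Qed.
Lemma blow_ok P u v : Rabs u <= 1 -> Rabs v <= 1 -> IZR (blow P) <= bev P u v.
Proof.
  intros Hu Hv. destruct P as [|a P]; simpl; [lra|].
  pose proof (babs_ok P u v Hu Hv).
  destruct a as [|c a]; simpl.
  - idtac.
    assert (Rabs (u * bev P u v) <= IZR (babs P)).
    { rewrite Rabs_mult. assert (0 <= Rabs (bev P u v)) by apply Rabs_pos.
      assert (0 <= Rabs u) by apply Rabs_pos. nra. }
    pose proof (abs_bnd _ _ H0) as HH. simpl in *. rewrite ?minus_IZR, ?opp_IZR. lra.
  - rewrite !minus_IZR.
    pose proof (uabs_ok a v Hv).
    assert (Rabs (u * bev P u v) <= IZR (babs P)).
    { rewrite Rabs_mult. assert (0 <= Rabs (bev P u v)) by apply Rabs_pos.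
      assert (0 <= Rabs u) by apply Rabs_pos. nra. }
    assert (Rabs (v * uev a v) <= IZR (uabs a)).
    { rewrite Rabs_mult. assert (0 <= Rabs (uev a v)) by apply Rabs_pos.
      assert (0 <= Rabs v) by apply Rabs_pos. nra. }
    pose proof (abs_bnd _ _ H1). pose proof (abs_bnd _ _ H2). lra.
Qed.
Definition Xw : list (list Z) * list (list Z) := ([[Z.opp 25; Z.opp 9]], [[1%Z]]).

Lemma wpow_ok (t w u v : R) (j : nat) :
  v = (16 * t - 25) / 9 -> (16 * w) * (16 * w) = 1152 ->
  bev (fst (wpow 1152 Xw j)) u v = 16 ^ j * Re (Cpow (- t, w)%R j) /\
  16 * w * bev (snd (wpow 1152 Xw j)) u v = 16 ^ j * Im (Cpow (- t, w)%R j).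
Proof.
  intros Hv Hw. induction j as [|j [IH1 IH2]].
  - simpl. split; ring.
  - change (wpow 1152 Xw (S j)) with (wmul 1152 Xw (wpow 1152 Xw j)).
    unfold wmul. cbn [fst snd].
    rewrite !bev_add, !bev_scal, !bev_mul, IH1.
    change (Cpow (- t, w)%R (S j)) with (Cmult (- t, w)%R (Cpow (- t, w)%R j)).
    destruct (Cpow (- t, w)%R j) as [re im]. simpl in *.
    subst v. split.
    + replace (16 * 16 ^ j * ((- t) * re - w * im)) with
        (16 * (- t) * (16 ^ j * re) - (16 * w) * (16 ^ j * im)) by ring.
      rewrite <- IH2. 
      replace (IZR (-1152)) with (- ((16 * w) * (16 * w))) by (rewrite Hw; reflexivity).
      field.
    + replace (16 * 16 ^ j * ((- t) * im + w * re)) with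
        (16 * (- t) * (16 ^ j * im) + (16 * w) * (16 ^ j * re)) by ring.
      rewrite <- IH2. field.
Qed.

Lemma uev_single z v : uev [z] v = IZR z.
Proof. simpl. ring. Qed.

Lemma T_le j : (j <= 11)%nat -> (j * (j + 1) / 2 <= 66)%nat.
Proof.
  intro H. do 12 (destruct j as [|j]; [simpl; lia|]). lia.
Qed.

Lemma tpoly_ok (q t w u v : R) (j : nat) : (j <= 11)%nat ->
  u = (40 * q - 27) / 3 -> v = (16 * t - 25) / 9 -> (16 * w) * (16 * w) = 1152 ->
  bev (tpoly 27 3 40 25 9 16 1152 j) u v =
  40 ^ 66 * 16 ^ 11 * Re (theta_term q (- t, w)%R j).
Proof.
  intros Hj Hu Hv Hw. unfold tpoly.
  fold Xw.
  rewrite bev_scal, bev_mul, bev_pow, uev_single.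
  assert (Hq : bev [[27%Z]; [3%Z]] u v = 40 * q) by (simpl; subst u; field).
  rewrite Hq.
  destruct (wpow_ok t w u v j Hv Hw) as [H1 _]. rewrite H1.
  unfold theta_term.
  set (T := (j * (j + 1) / 2)%nat).
  assert (HT : (T <= 66)%nat) by (apply T_le; exact Hj).
  assert (HRe : forall r z, Re (Cmult (RtoC r) z) = r * Re z).
  { intros r [z1 z2]. unfold Cmult, RtoC, Re; cbn [fst snd]. ring. }
  rewrite HRe.
  rewrite mult_IZR, <- !pow_IZR.
  replace (40 ^ 66) with (40 ^ (66 - T) * 40 ^ T) by (rewrite <- pow_add; f_equal; lia).
  replace (16 ^ 11) with (16 ^ (11 - j) * 16 ^ j) by (rewrite <- pow_add; f_equal; lia).
  rewrite Rpow_mult_distr. ring.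
Qed.

Lemma Fpoly_ok (q t w u v : R) (n : nat) : (n <= 11)%nat ->
  u = (40 * q - 27) / 3 -> v = (16 * t - 25) / 9 -> (16 * w) * (16 * w) = 1152 ->
  bev (Fpoly 27 3 40 25 9 16 1152 n) u v =
  40 ^ 66 * 16 ^ 11 * Re (sum_n (theta_term q (- t, w)%R) n).
Proof.
  intros Hn Hu Hv Hw. induction n as [|n IH].
  - simpl Fpoly. rewrite sum_O. apply tpoly_ok; auto.
  - change (Fpoly 27 3 40 25 9 16 1152 (S n)) with
      (badd (Fpoly 27 3 40 25 9 16 1152 n) (tpoly 27 3 40 25 9 16 1152 (S n))).
    rewrite bev_add, IH by lia. rewrite (tpoly_ok q t w u v) by auto.
    rewrite sum_Sn. simpl. ring.
Qed.

Lemma check_true : Z.leb (40 ^ 66 * 16 ^ 11) (100 * blow (Fpoly 27 3 40 25 9 16 1152 11)) = true.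
Proof. vm_compute. reflexivity. Qed.

Lemma partial_bound (q t w : R) : 6/10 <= q <= 3/4 -> 1 <= t <= 17/8 ->
  (16 * w) * (16 * w) = 1152 ->
  1/100 <= Re (sum_n (theta_term q (- t, w)%R) 11).
Proof.
  intros Hq Ht Hw.
  set (u := (40 * q - 27) / 3). set (v := (16 * t - 25) / 9).
  assert (Hu : Rabs u <= 1) by (apply Rabs_le; unfold u; lra).
  assert (Hv : Rabs v <= 1) by (apply Rabs_le; unfold v; lra).
  pose proof (blow_ok (Fpoly 27 3 40 25 9 16 1152 11) u v Hu Hv) as H1.
  rewrite (Fpoly_ok q t w u v 11) in H1 by (auto; lia).
  pose proof check_true as H2. apply Z.leb_le, IZR_le in H2.
  change (40 ^ 66)%Z with (40 ^ Z.of_nat 66)%Z in H2.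
  change (16 ^ 11)%Z with (16 ^ Z.of_nat 11)%Z in H2.
  rewrite !mult_IZR, <- !pow_IZR in H2.
  assert (Hpos : 0 < 40 ^ 66 * 16 ^ 11) by (apply Rmult_lt_0_compat; apply pow_lt; lra).
  set (R0 := Re _) in *. set (D := 40 ^ 66 * 16 ^ 11) in *.
  set (B := IZR (blow _)) in *.
  assert (D * (1/100) <= D * R0) by nra.
  apply Rmult_le_reg_l with D; auto.
Qed.

Lemma T_S n : ((S n) * (S n + 1) / 2 = n * (n + 1) / 2 + S n)%nat.
Proof.
  replace (S n * (S n + 1))%nat with (n * (n + 1) + S n * 2)%nat by ring.
  apply Nat.div_add. lia.
Qed.

Lemma Cmod_term_S q x n : 0 <= q ->
  Cmod (theta_term q x (S n)) = q ^ (S n) * Cmod x * Cmod (theta_term q x n).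
Proof.
  intro Hq. unfold theta_term.
  rewrite !Cmod_mult, !Cmod_R, !Cmod_pow, !Rabs_pos_eq by (apply pow_le; auto).
  rewrite T_S, pow_add. simpl. ring.
Qed.

Lemma Cmod_term q x n : 0 <= q ->
  Cmod (theta_term q x n) = q ^ (n * (n + 1) / 2) * Cmod x ^ n.
Proof.
  intro Hq. unfold theta_term.
  rewrite !Cmod_mult, !Cmod_R, !Cmod_pow, !Rabs_pos_eq by (apply pow_le; auto).
  reflexivity.
Qed.

Lemma tail_term (q : R) x (k : nat) : 6/10 <= q <= 3/4 -> Cmod x <= 3 ->
  Cmod (theta_term q x (12 + k)) <= 1/1000 * (1/2) ^ k.
Proof.
  intros Hq Hx. assert (Hx0 : 0 <= Cmod x) by apply Cmod_ge_0.
  induction k as [|k IH].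
  - rewrite Nat.add_0_r, Cmod_term by lra.
    change (12 * (12 + 1) / 2)%nat with 78%nat.
    assert (q ^ 78 <= (3/4) ^ 78) by (apply pow_incr; lra).
    assert (Cmod x ^ 12 <= 3 ^ 12) by (apply pow_incr; lra).
    assert (0 <= q ^ 78) by (apply pow_le; lra).
    assert (0 <= Cmod x ^ 12) by (apply pow_le; lra).
    assert ((3/4)^78 * 3^12 <= 1/1000) by (simpl; lra).
    simpl pow at 3. 
    assert (q ^ 78 * Cmod x ^ 12 <= (3/4) ^ 78 * 3 ^ 12).
    { apply Rmult_le_compat; auto. }
    lra.
  - rewrite Nat.add_succ_r, Cmod_term_S by lra.
    assert (Hqn : q ^ S (12 + k) <= (3/4) ^ 13).
    { replace (S (12 + k)) with (13 + k)%nat by lia. rewrite pow_add.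
      assert (q ^ 13 <= (3/4) ^ 13) by (apply pow_incr; lra).
      assert (q ^ k <= 1) by (rewrite <- (pow1 k); apply pow_incr; lra).
      assert (0 <= q ^ 13) by (apply pow_le; lra).
      assert (0 <= q ^ k) by (apply pow_le; lra).
      assert (0 <= (3/4) ^ 13) by (apply pow_le; lra).
      nra. }
    assert ((3/4) ^ 13 * 3 <= 1/2) by (simpl; lra).
    assert (0 <= q ^ S (12 + k)) by (apply pow_le; lra).
    assert (0 <= Cmod (theta_term q x (12 + k))) by apply Cmod_ge_0.
    assert (q ^ S (12 + k) * Cmod x <= 1/2) by nra.
    simpl pow at 2.
    assert (0 <= (1/2) ^ k) by (apply pow_le; lra).
    nra.
Qed.

Lemma w_facts : w * w = 9/2 /\ 0 < w /\ w <= 17/8.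
Proof.
  unfold w. pose proof (sqrt_lt_R0 2 ltac:(lra)) as Hs.
  pose proof (sqrt_sqrt 2 ltac:(lra)) as Hss.
  assert (Hs2 : 1412/1000 < sqrt 2) by nra.
  split; [|split].
  - replace (3 / sqrt 2 * (3 / sqrt 2)) with (9 / (sqrt 2 * sqrt 2)) by (field; lra).
    rewrite Hss. field.
  - apply Rdiv_lt_0_compat; lra.
  - apply Rmult_le_reg_r with (sqrt 2); [lra|].
    field_simplify; [|lra]. lra.
Qed.

Lemma Cpm (x y : C) : Cplus (Cplus x y) (Copp y) = x.
Proof. destruct x, y. apply injective_projections; simpl; ring. Qed.

Theorem lemma9 : forall q t : R,
  6/10 <= q <= 3/4 -> 1 <= t <= w ->
  exists l : C, theta_is q (-t, w)%R l /\ l <> (0, 0)%R.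
Proof.
  intros q t Hq Ht.
  destruct w_facts as [Hw2 [Hw0 Hw1]].
  set (a := theta_term q (- t, w)%R).
  assert (Hx : Cmod (- t, w)%R <= 3).
  { pose proof (Cmod2_alt (- t, w)%R) as H. simpl in H.
    pose proof (Cmod_ge_0 (- t, w)%R). nra. }
  set (b := fun k => a (12 + k)%nat).
  assert (HbC : forall k, Cmod (b k) <= 1/1000 * (1/2) ^ k).
  { intro k. apply tail_term; auto. }
  assert (Hb : forall k, norm (b k) <= 1/1000 * (1/2) ^ k).
  { intro k. exact (HbC k). }
  assert (Hexb : ex_series b).
  { apply (ex_series_le b (fun k => 1/1000 * (1/2) ^ k)); auto.
    exists (scal (1/1000) (/ (1 - 1/2))).
    apply (is_series_scal_l (1/1000) (fun k => (1/2) ^ k)).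
    apply is_series_geom. rewrite Rabs_pos_eq; lra. }
  destruct Hexb as [lb Hlb].
  assert (Hnorm : Cmod lb <= 2/1000).
  { apply (closed_filterlim (sum_n b) (fun z => Cmod z <= 2/1000) lb Hlb).
    - intro n.
      assert (forall n, Cmod (sum_n b n) <= 2/1000 * (1 - (1/2) ^ (S n))).
      { induction n0 as [|n0 IH].
        + rewrite sum_O. pose proof (HbC 0%nat). simpl pow in *. lra.
        + rewrite sum_Sn. eapply Rle_trans; [apply Cmod_triangle|].
          pose proof (HbC (S n0)). simpl pow in *. lra. }
      pose proof (H n). assert (0 <= (1/2) ^ (S n)) by (apply pow_le; lra). lra.
    - change (closed (fun z : C => @norm C_AbsRing C_NormedModule z <= 2/1000)).
      apply (closed_comp (@norm C_AbsRing C_NormedModule) (fun r => r <= 2/1000)).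
      + intro z. apply filterlim_norm.
      + apply closed_le. }
  set (S := sum_n a 11).
  exists (plus lb S). split.
  - unfold theta_is. fold a.
    apply (is_series_decr_n a 12). lia.
    simpl Nat.pred. unfold S.
    match goal with |- is_series _ ?L => replace L with lb; [exact Hlb|] end.
    symmetry. exact (Cpm lb (sum_n a 11)).
  - intro Heq.
    assert (HS : 1/100 <= Re S).
    { apply partial_bound; auto; [lra|]. nra. }
    assert (Hre : Re (plus lb S) = Re lb + Re S).
    { destruct lb, S; reflexivity. }
    rewrite Heq in Hre. change (Re (0, 0)%R) with 0 in Hre.
    pose proof (re_le_Cmod lb).
    apply abs_bnd in H. lra.
Qed.
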